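(* Let $\underline{c}=\{c_n,n\ge1\}$ be positive reals with $c_n\to c\ge1$. Let $\{\varphi_n,n\ge1\}$ be a sequence of real numbers which is $\underline{c}$-subadditive, i.e. $$\varphi_{n_1+\dots+n_k}\le c_{n_1+\dots+n_k}(\varphi_{n_1}+\dots+\varphi_{n_k})$$ for all positive integers $n_1,\dots,n_k$ and all $k\ge1$. Then $$\inf_{n\ge1}\frac{\varphi_n}{n}\le\liminf_{n\to\infty}\frac{\varphi_n}{n}\le\limsup_{n\to\infty}\frac{\varphi_n}{n}\le c^2\inf_{n\ge1}\frac{\varphi_n}{n}.$$ *)

(* Defs.v *)
From Stdlib Require Import Reals Lra Lia List.
Open Scope R_scope.

Inductive Rbar : Type := Finite (r : R) | p_infty | m_infty.

Definition Rbar_le (x y : Rbar) : Prop :=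
  match x, y with
  | m_infty, _ => True
  | _, p_infty => True
  | p_infty, _ => False
  | _, m_infty => False
  | Finite a, Finite b => a <= b
  end.

Definition Rbar_scale (k : R) (x : Rbar) : Rbar :=
  match x with
  | Finite r => Finite (k * r)
  | p_infty => p_infty
  | m_infty => m_infty
  end.

Definition is_inf_pos (u : nat -> R) (l : Rbar) : Prop :=
  (forall n, (1 <= n)%nat -> Rbar_le l (Finite (u n))) /\
  (forall m : Rbar, (forall n, (1 <= n)%nat -> Rbar_le m (Finite (u n))) -> Rbar_le m l).

Definition is_liminf (u : nat -> R) (l : Rbar) : Prop :=
  match l with
  | Finite a => forall eps, 0 < eps ->
      (exists N, forall n, (N <= n)%nat -> a - eps < u n) /\
      (forall N, exists n, (N <= n)%nat /\ u n < a + eps)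
  | p_infty => forall M, exists N, forall n, (N <= n)%nat -> M < u n
  | m_infty => forall M N, exists n, (N <= n)%nat /\ u n < M
  end.

Definition is_limsup (u : nat -> R) (l : Rbar) : Prop :=
  match l with
  | Finite a => forall eps, 0 < eps ->
      (exists N, forall n, (N <= n)%nat -> u n < a + eps) /\
      (forall N, exists n, (N <= n)%nat /\ a - eps < u n)
  | p_infty => forall M N, exists n, (N <= n)%nat /\ M < u n
  | m_infty => forall M, exists N, forall n, (N <= n)%nat -> u n < M
  end.

Definition Rsum_list (l : list R) : R := fold_right Rplus 0 l.

Definition c_subadditive (c phi : nat -> R) : Prop :=
  forall l : list nat, l <> nil -> (forall m, In m l -> (1 <= m)%nat) ->
    phi (list_sum l) <= c (list_sum l) * Rsum_list (map phi l).

(* Main.v *)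
Require Import Defs.
From Stdlib Require Import Reals Lra Lia List.
Open Scope R_scope.

Lemma list_sum_repeat a k : list_sum (repeat a k) = (k * a)%nat.
Proof. induction k; simpl; auto. Qed.

Lemma Rsum_repeat x k : Rsum_list (repeat x k) = INR k * x.
Proof. induction k; simpl. unfold Rsum_list; simpl; ring.
  unfold Rsum_list in *; simpl. rewrite IHk. destruct k; simpl; ring. Qed.

Lemma Rsum_app l1 l2 : Rsum_list (l1 ++ l2) = Rsum_list l1 + Rsum_list l2.
Proof. induction l1; unfold Rsum_list in *; simpl; [ring|]. rewrite IHl1; ring. Qed.

Lemma step1 c phi m k : c_subadditive c phi -> (1 <= m)%nat -> (1 <= k)%nat ->
  phi (k*m)%nat <= c (k*m)%nat * (INR k * phi m).
Proof.
  intros H Hm Hk.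
  pose proof (H (repeat m k)) as H1.
  rewrite list_sum_repeat, map_repeat, Rsum_repeat in H1.
  apply H1. destruct k; [lia|discriminate].
  intros x Hx; apply repeat_spec in Hx; subst; auto.
Qed.

Lemma step2 c phi K q r : c_subadditive c phi -> (1 <= K)%nat -> (1 <= q)%nat ->
  phi (q*K + r)%nat <= c (q*K+r)%nat * (INR q * phi K + INR r * phi 1%nat).
Proof.
  intros H HK Hq.
  pose proof (H (repeat K q ++ repeat 1%nat r)) as H1.
  rewrite list_sum_app, !list_sum_repeat, map_app, !map_repeat, Rsum_app, !Rsum_repeat in H1.
  replace (r*1)%nat with r in H1 by lia.
  apply H1. destruct q; [lia|discriminate].
  intros x Hx; apply in_app_or in Hx; destruct Hx as [Hx|Hx];
   apply repeat_spec in Hx; subst; lia.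
Qed.

Lemma alg cn cK pm p1 q k m r N : N <> 0 -> m <> 0 -> N = q*(k*m)+r ->
  cn*(q*(cK*(k*pm)) + r*p1)/N = cn*((1 - r/N)*(cK*(pm/m)) + r/N*p1).
Proof. intros HN Hm E. subst N. field. auto. Qed.

Lemma cv_const x : Un_cv (fun _ => x) x.
Proof. intros e He; exists 0%nat; intros; rewrite R_dist_eq; auto. Qed.

Lemma cv_w K : (1 <= K)%nat -> Un_cv (fun n => INR (n mod K) / INR n) 0.
Proof.
  intros HK e He.
  destruct (INR_unbounded (INR K / e)) as [N HN].
  exists (S N). intros n Hn. unfold R_dist.
  assert (Hr: (n mod K < K)%nat) by (apply Nat.mod_upper_bound; lia).
  apply lt_INR in Hr.
  assert (HnN: INR N < INR n) by (apply lt_INR; lia).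
  assert (Hn0: 0 < INR n) by (apply lt_0_INR; lia).
  assert (H0: 0 <= INR (n mod K)) by apply pos_INR.
  rewrite Rminus_0_r, Rabs_pos_eq.
  2:{ apply Rmult_le_pos; auto. left; apply Rinv_0_lt_compat; auto. }
  apply Rmult_lt_reg_r with (INR n); auto.
  unfold Rdiv; rewrite Rmult_assoc, Rinv_l by lra.
  assert (INR K < e * INR n).
  { apply Rmult_lt_reg_r with (/e). apply Rinv_0_lt_compat; auto.
    replace (e * INR n * / e) with (INR n) by (field; lra). unfold Rdiv in HN. lra. }
  lra.
Qed.

Lemma keyA (c phi : nat -> R) (cl : R)
  (hcpos : forall n, (1 <= n)%nat -> 0 < c n)
  (hcv : Un_cv c cl) (hcl : 1 <= cl)
  (hsub : c_subadditive c phi) m eps : (1 <= m)%nat -> 0 < eps ->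
  exists N, forall n, (N <= n)%nat -> phi n / INR n < cl^2 * (phi m / INR m) + eps.
Proof.
  intros Hm He.
  set (v := phi m / INR m).
  set (A := cl * Rabs v).
  assert (HA : 0 <= A) by (unfold A; apply Rmult_le_pos; [lra|apply Rabs_pos]).
  set (e1 := eps / (2*(A+1))).
  assert (He1 : 0 < e1) by (unfold e1; apply Rdiv_lt_0_compat; lra).
  assert (He1' : e1 * (2*(A+1)) = eps) by (unfold e1; field; lra).
  destruct (hcv e1 He1) as [N0 HN0].
  set (k := S N0). set (K := (k*m)%nat).
  assert (HK1 : (1 <= K)%nat) by (unfold K, k; nia).
  assert (HcK : Rabs (c K - cl) < e1) by (apply (HN0 K); unfold K, k; nia).
  assert (Hclose : cl * (c K * v) < cl^2 * v + eps/2).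
  { assert (cl * (c K * v) - cl^2*v = cl*v*(c K - cl)) by ring.
    assert (cl*v*(c K - cl) <= A * Rabs (c K - cl)).
    { eapply Rle_trans. apply Rle_abs. rewrite !Rabs_mult. unfold A.
      rewrite (Rabs_pos_eq cl) by lra. lra. }
    assert (A * Rabs (c K - cl) <= A * e1) by (apply Rmult_le_compat_l; lra).
    nra. }
  set (w := fun n => INR (n mod K) / INR n).
  set (E := fun n => c n * ((1 - w n) * (c K * v) + w n * phi 1%nat)).
  assert (HE : Un_cv E (cl * ((1 - 0) * (c K * v) + 0 * phi 1%nat))).
  { unfold E. apply CV_mult; auto. apply CV_plus; apply CV_mult.
    apply CV_minus. apply cv_const. apply cv_w; auto. apply cv_const.
    apply cv_w; auto. apply cv_const. }
  assert (He2 : 0 < eps/2) by lra.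
  destruct (HE _ He2) as [N1 HN1].
  exists (Nat.max N1 K). intros n Hn.
  assert (HEn : E n < cl * (c K * v) + eps/2).
  { specialize (HN1 n ltac:(lia)). unfold R_dist in HN1.
    apply Rabs_def2 in HN1. lra. }
  set (q := (n / K)%nat). set (r := (n mod K)%nat).
  assert (Hdm : n = (q*K + r)%nat) by (unfold q, r; rewrite (Nat.div_mod_eq n K) at 1; lia).
  assert (Hq : (1 <= q)%nat).
  { unfold q. apply Nat.div_le_lower_bound; lia. }
  pose proof (step2 c phi K q r hsub HK1 Hq) as H2.
  rewrite <- Hdm in H2.
  pose proof (step1 c phi m k hsub Hm ltac:(unfold k; lia)) as H1.
  fold K in H1.
  assert (Hcn : 0 < c n) by (apply hcpos; lia).
  assert (Hn0 : 0 < INR n) by (apply lt_0_INR; lia).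
  assert (Hm0 : 0 < INR m) by (apply lt_0_INR; lia).
  assert (H3 : phi n <= c n * (INR q * (c K * (INR k * phi m)) + INR r * phi 1%nat)).
  { eapply Rle_trans; [apply H2|]. apply Rmult_le_compat_l; [lra|].
    apply Rplus_le_compat_r. apply Rmult_le_compat_l; [apply pos_INR|auto]. }
  assert (H4 : phi n / INR n <= E n).
  { unfold E, w, v. fold r.
    rewrite <- (alg (c n) (c K) (phi m) (phi 1%nat) (INR q) (INR k) (INR m) (INR r) (INR n));
      try lra.
    - unfold Rdiv. apply Rmult_le_compat_r; auto. left; apply Rinv_0_lt_compat; auto.
    - rewrite Hdm at 1. unfold K. rewrite plus_INR, !mult_INR. ring. }
  lra.
Qed.

Theorem mainTheorem7 (c phi : nat -> R) (cl : R)
  (hcpos : forall n, (1 <= n)%nat -> 0 < c n)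
  (hcv : Un_cv c cl) (hcl : 1 <= cl)
  (hsub : c_subadditive c phi)
  (i li ls : Rbar)
  (hi : is_inf_pos (fun n => phi n / INR n) i)
  (hli : is_liminf (fun n => phi n / INR n) li)
  (hls : is_limsup (fun n => phi n / INR n) ls) :
  Rbar_le i li /\ Rbar_le li ls /\ Rbar_le ls (Rbar_scale (cl ^ 2) i).
Proof.
  set (u := fun n => phi n / INR n) in *.
  destruct hi as [hi1 hi2].
  assert (Hinp : i <> p_infty) by (intro E; subst; apply (hi1 1%nat); lia).
  split; [|split].
  - destruct li as [a| |]; destruct i as [b| |]; simpl; auto.
    + destruct (Rle_lt_dec b a) as [|Hlt]; auto.
      destruct (hli (b - a) ltac:(lra)) as [_ H]. destruct (H 1%nat) as [n [Hn Hu]].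
      specialize (hi1 n Hn). simpl in hi1. lra.
    + destruct (hli b 1%nat) as [n [Hn Hu]]. specialize (hi1 n Hn). simpl in hi1. lra.
  - destruct li as [a| |]; destruct ls as [b| |]; simpl; auto.
    + destruct (Rle_lt_dec a b) as [|Hlt]; auto.
      destruct (hli ((a-b)/2) ltac:(lra)) as [[N1 H1] _].
      destruct (hls ((a-b)/2) ltac:(lra)) as [[N2 H2] _].
      specialize (H1 (N1+N2)%nat ltac:(lia)). specialize (H2 (N1+N2)%nat ltac:(lia)). lra.
    + destruct (hli 1 Rlt_0_1) as [[N1 H1] _]. destruct (hls (a-1)) as [N2 H2].
      specialize (H1 (N1+N2)%nat ltac:(lia)). specialize (H2 (N1+N2)%nat ltac:(lia)). lra.
    + destruct (hli (b+1)) as [N1 H1]. destruct (hls 1 Rlt_0_1) as [[N2 H2] _].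
      specialize (H1 (N1+N2)%nat ltac:(lia)). specialize (H2 (N1+N2)%nat ltac:(lia)). lra.
    + destruct (hli 0) as [N1 H1]. destruct (hls 0) as [N2 H2].
      specialize (H1 (N1+N2)%nat ltac:(lia)). specialize (H2 (N1+N2)%nat ltac:(lia)). lra.
  - assert (Hcl2 : 0 < cl^2) by nra.
    destruct ls as [a| |].
    + assert (Hb : forall m, (1 <= m)%nat -> a <= cl^2 * u m).
      { intros m Hm. destruct (Rle_lt_dec a (cl^2 * u m)) as [|Hlt]; auto.
        set (e := (a - cl^2 * u m)/2).
        destruct (keyA c phi cl hcpos hcv hcl hsub m e Hm ltac:(unfold e; lra)) as [N HN].
        destruct (hls e ltac:(unfold e; lra)) as [_ H]. destruct (H N) as [n [Hn Hu]].
        specialize (HN n Hn). unfold u in *. unfold e in *. lra. }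
      assert (Hlb : Rbar_le (Finite (a / cl^2)) i).
      { apply hi2. intros n Hn. change (a / cl^2 <= u n). specialize (Hb n Hn).
        apply Rmult_le_reg_r with (cl^2); auto.
        replace (a / cl^2 * cl^2) with a by (field; lra). unfold u in *. lra. }
      destruct i as [b| |]; simpl in *; auto.
      assert (a = (a / (cl * (cl*1))) * (cl*(cl*1))) by (field; lra).
      rewrite H. rewrite (Rmult_comm (cl*(cl*1)) b).
      apply Rmult_le_compat_r; lra.
    + exfalso.
      destruct (keyA c phi cl hcpos hcv hcl hsub 1%nat 1 (le_n 1) Rlt_0_1) as [N HN].
      destruct (hls (cl ^ 2 * (phi 1%nat / INR 1) + 1) N) as [n [Hn Hu]].
      specialize (HN n Hn). unfold u in Hu. lra.
    + simpl; auto.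
Qed.
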